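(* For $k\ge 2$, the number of minimal unavoidable subsets of $\overline{S_k}$ is at most $\binom{k!}{k!/2}$.
   Context: For $\sigma\in S_n$, the cyclic permutation $[\sigma]$ is the set of all rotations of $\sigma$. For $\pi\in S_k$, the totally vincular pattern $\overline{\pi}$ is $\pi$ with all adjacent positions overlined; a cyclic permutation $[\sigma]$ of length $n\ge k$ contains $\overline{\pi}$ if some $k$ cyclically consecutive entries of $\sigma$ are order-isomorphic to $\pi$. $\overline{S_k}$ is the set of totally vincular patterns of length $k$. For $\Pi\subseteq\overline{S_k}$, $\mathrm{Av}_n[\Pi]$ is the set of cyclic permutations of length $n$ containing no pattern of $\Pi$. $\Pi$ is unavoidable if $|\mathrm{Av}_n[\Pi]|=0$ for all sufficiently large $n$, avoidable otherwise; it is minimal unavoidable if it is unavoidable and every proper subset is avoidable. *)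

(* Defs.v *)
From mathcomp Require Import all_boot all_fingroup.
Set Implicit Arguments. Unset Strict Implicit. Unset Printing Implicit Defensive.

Definition cyc_entry (n : nat) (s : {perm 'I_n}) (j : nat) : nat :=
  nth 0 [seq val (s x) | x <- enum 'I_n] (j %% n).

(* [sigma] contains the totally vincular pattern \overline{pi}:
   some k cyclically consecutive entries are order-isomorphic to pi. *)
Definition cyc_contains (n k : nat) (s : {perm 'I_n}) (p : {perm 'I_k}) : Prop :=
  k <= n /\
  exists i : 'I_n, forall a b : 'I_k,
    (cyc_entry s (i + a) < cyc_entry s (i + b)) = (val (p a) < val (p b)).

Definition cyc_avoids (n k : nat) (s : {perm 'I_n}) (P : {set {perm 'I_k}}) : Prop :=
  forall p, p \in P -> ~ cyc_contains s p.

Definition unavoidable (k : nat) (P : {set {perm 'I_k}}) : Prop :=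
  exists N, forall n, N <= n -> forall s : {perm 'I_n}, ~ cyc_avoids s P.

Definition avoidable (k : nat) (P : {set {perm 'I_k}}) : Prop := ~ unavoidable P.

Definition minimal_unavoidable (k : nat) (P : {set {perm 'I_k}}) : Prop :=
  unavoidable P /\ forall Q : {set {perm 'I_k}}, Q \proper P -> avoidable Q.

(* Main.v *)
Require Import Defs.
From mathcomp Require Import all_boot all_fingroup.
From mathcomp Require Import zify.

Section Sperner.
Variable T : finType.

Lemma lym n : forall (U : {set T}) (A : {set {set T}}), #|U| = n ->
  (forall a, a \in A -> a \subset U) ->
  (forall a b, a \in A -> b \in A -> a \proper b -> False) ->
  \sum_(a in A) #|a|`! * (#|U| - #|a|)`! <= #|U|`!.
Proof.
elim: n => [|n IH] U A hU sub anti.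
- case: (boolP (U \in A)) => UA.
  + have -> : A = [set U].
      apply/setP => a; rewrite inE; apply/idP/eqP => [aA|->//].
      apply/eqP; rewrite eqEproper sub //=; apply/negP => pr.
      exact: (anti a U).
    by rewrite big_set1 subnn muln1.
  + rewrite big1 // => a aA; exfalso.
    have pr : a \proper U.
      rewrite properEneq sub // andbT; apply/eqP => eaU.
      by rewrite -eaU aA in UA.
    by have := proper_card pr; rewrite hU.
- case: (boolP (U \in A)) => UA.
  + have -> : A = [set U].
      apply/setP => a; rewrite inE; apply/idP/eqP => [aA|->//].
      apply/eqP; rewrite eqEproper sub //=; apply/negP => pr.
      exact: (anti a U).
    by rewrite big_set1 subnn muln1.
  have prA : forall a, a \in A -> #|a| < #|U|.
    move=> a aA; apply: proper_card.
    rewrite properEneq sub // andbT; apply/eqP => eaU.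
    by rewrite -eaU aA in UA.
  rewrite hU.
  have E1 : \sum_(a in A) #|a|`! * (n.+1 - #|a|)`!
     = \sum_(a in A) \sum_(x in U | x \notin a) #|a|`! * (n - #|a|)`!.
    apply: eq_bigr => a aA.
    rewrite sum_nat_const.
    have -> : #|[pred x in U | x \notin a]| = #|U :\: a|.
      by apply: eq_card => x; rewrite !inE andbC.
    rewrite cardsD (setIidPr (sub a aA)) hU.
    have := prA a aA; rewrite hU => lt.
    have -> : n.+1 - #|a| = (n - #|a|).+1 by rewrite subSn.
    by rewrite factS mulnCA.
  rewrite E1 (exchange_big_dep (fun x => x \in U)) /=; last by move=> a x _ /andP[].
  apply: (@leq_trans (\sum_(x in U) n`!)); last first.
    by rewrite sum_nat_const hU factS.
  apply: leq_sum => x xU.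
  have hU' : #|U :\ x| = n by move: (cardsD1 x U); rewrite xU hU add1n => -[].
  have := IH (U :\ x) [set a in A | x \notin a] hU'.
  rewrite hU'.
  have -> : \sum_(a in [set a in A | x \notin a]) #|a|`! * (n - #|a|)`!
          = \sum_(a in A | x \notin a) #|a|`! * (n - #|a|)`!.
    by apply: eq_bigl => a; rewrite inE.
  rewrite xU /=; apply.
  + move=> a; rewrite inE => /andP[aA xa].
    apply/subsetP => y ya; rewrite !inE (subsetP (sub a aA)) // andbT.
    by apply/eqP => eyx; rewrite -eyx ya in xa.
  + move=> a b; rewrite !inE => /andP[aA _] /andP[bA _]; exact: anti.
Qed.

Lemma fact_step n j : j < n ->
  (j.+1 <= n - j -> j.+1`! * (n - j.+1)`! <= j`! * (n - j)`!) /\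
  (n - j <= j.+1 -> j`! * (n - j)`! <= j.+1`! * (n - j.+1)`!).
Proof.
move=> ljn.
have -> : n - j = (n - j.+1).+1 by rewrite subnSK.
set m := n - j.+1.
rewrite !factS; split => h.
- by rewrite -mulnA [X in _ <= X]mulnCA leq_mul2r h orbT.
- by rewrite -mulnA [X in X <= _]mulnCA leq_mul2r h orbT.
Qed.

Lemma fact_min n j : j <= n ->
  (n./2)`! * (n - n./2)`! <= j`! * (n - j)`!.
Proof.
move=> jn.
have h2 : n./2 <= n - n./2.
  rewrite leq_subRL; last by rewrite -{2}(odd_double_half n); lia.
  by rewrite -{3}(odd_double_half n) addnn; case: (odd n).
have h3 : n - n./2 <= (n./2).+1.
  rewrite leq_subLR; rewrite -{1}(odd_double_half n) -addnn; case: (odd n) => /=; lia.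
case: (leqP j n./2) => hj.
- have: forall d, d <= n./2 -> (n./2)`! * (n - n./2)`! <= (n./2 - d)`! * (n - (n./2 - d))`!.
    elim => [|d IHd] hd; first by rewrite subn0.
    apply: (leq_trans (IHd (ltnW hd))).
    have e : n./2 - d = (n./2 - d.+1).+1 by rewrite subnSK.
    rewrite e; have [lt1 le1] : n./2 - d.+1 < n /\ (n./2 - d.+1).+1 <= n - (n./2 - d.+1); last first.
      by have [s1 _] := fact_step _ _ lt1; apply: s1.
    move: hd h2 h3; set h := n./2 => hd h2' h3'; split; lia.
  move=> /(_ (n./2 - j) (leq_subr _ _)); rewrite subKn //.
- have: forall d, n./2 + d <= n -> (n./2)`! * (n - n./2)`! <= (n./2 + d)`! * (n - (n./2 + d))`!.
    elim => [|d IHd] hd; first by rewrite addn0.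
    have hd' : n./2 + d <= n by rewrite addnS in hd; exact: ltnW.
    apply: (leq_trans (IHd hd')).
    rewrite addnS; have lt1 : n./2 + d < n by rewrite -addnS.
    have [_ s2] := fact_step _ _ lt1; apply: s2.
    move: hd h2 h3; set h := n./2 => hd h2' h3'; lia.
  move=> /(_ (j - n./2)); rewrite subnKC ?(ltnW hj) //; apply; exact: jn.
Qed.

Lemma sperner (A : {set {set T}}) :
  (forall a b, a \in A -> b \in A -> a \proper b -> False) ->
  #|A| <= 'C(#|T|, #|T|./2).
Proof.
move=> anti.
have := @lym #|T| setT A (cardsT T) (fun a _ => subsetT a) anti.
rewrite cardsT => hs.
have hm : #|T|./2 <= #|T| by rewrite -{2}(odd_double_half #|T|); lia.
rewrite -(@leq_pmul2r ((#|T|./2)`! * (#|T| - #|T|./2)`!)); last by rewrite muln_gt0 !fact_gt0.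
rewrite bin_fact // -sum_nat_const.
apply: leq_trans hs; apply: leq_sum => a _.
apply: fact_min; exact: max_card.
Qed.

End Sperner.

Theorem proposition6p2 (k : nat) (hk : 2 <= k)
  (A : {set {set {perm 'I_k}}}) :
  (forall P, P \in A -> minimal_unavoidable P) ->
  #|A| <= 'C(k`!, k`! %/ 2).
Proof.
move=> hA.
have -> : k`! = #|{perm 'I_k}| by rewrite card_Sn.
rewrite divn2; apply: sperner => a b aA bA pr.
have [ua _] := hA a aA.
have [_ mb] := hA b bA.
exact: (mb a pr ua).
Qed.
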